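(* Assume there is a measure $\lambda$ on $\mathcal{X}$ with $T(\cdot\mid x)\ll\lambda$ for every $x$, with densities $t(\cdot\mid x)=dT(\cdot\mid x)/d\lambda$ forming a uniformly bounded, equicontinuous family (for every $x'\in\mathcal{X}$ and $\epsilon>0$ there is $\delta>0$ such that $d(y,x')<\delta$ implies $|t(y\mid x)-t(x'\mid x)|<\epsilon$ for all $x$). Let $\mu,\nu$ be priors and let $f_{n-}^\mu$, $f_{n-}^\nu$ denote the densities of $\pi_{n-}^\mu$, $\pi_{n-}^\nu$ with respect to $\lambda$. Fix any sequence of measurements $y_{[0,\infty)}$. Then the collections $\mathscr{F}^\mu=\{f_{n-}^\mu: n\in\mathbb{N}\}$ and $\mathscr{F}^\nu=\{f_{n-}^\nu:n\in\mathbb{N}\}$ are uniformly bounded, equicontinuous families.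
   Context: Setting: $\mathcal{X},\mathcal{Y},\mathcal{Z}$ are Polish spaces, $d$ the metric on $\mathcal{X}$. $T$ is a transition kernel on $\mathcal{X}$; $\{Z_n\}$ i.i.d. with law $Q$ independent of the states; $h:\mathcal{X}\times\mathcal{Z}\to\mathcal{Y}$ measurable; $X_0\sim\mu$, $Y_n=h(X_n,Z_n)$; $P^\mu$ the joint law. Predictor $\pi_{n-}^{\mu}=P^{\mu}(X_n\in\cdot\mid Y_0,\dots,Y_{n-1})$, evaluated along the fixed measurement sequence; the predictors are absolutely continuous with respect to $\lambda$ for $n\ge1$. *)

(* Defs.v *)
From HB Require Import structures.
From mathcomp Require Import all_boot all_order all_algebra.
From mathcomp Require Import all_classical all_reals all_analysis.
Set Implicit Arguments. Unset Strict Implicit. Unset Printing Implicit Defensive.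
Import Order.TTheory GRing.Theory Num.Theory.
Local Open Scope classical_set_scope.
Local Open Scope ring_scope.

Definition is_metric (R : realType) (X : Type) (dist : X -> X -> R) : Prop :=
  [/\ (forall x y, 0 <= dist x y),
      (forall x y, dist x y = 0 <-> x = y),
      (forall x y, dist x y = dist y x) &
      (forall x y z, dist x z <= dist x y + dist y z)].

Definition dball (R : realType) (X : Type) (dist : X -> X -> R) (x : X) (r : R)
  : set X := [set z | dist x z < r].

(* (X, dist) is a Polish metric space (complete, separable) and the
   measurable sets of X are exactly its Borel sets (the sigma-algebra
   generated by the open balls, which for a separable metric space is the
   Borel sigma-algebra). *)
Definition polish_borel (d : measure_display) (R : realType)
  (X : measurableType d) (dist : X -> X -> R) : Prop :=
  [/\ is_metric dist,
      (forall u : nat -> X,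
         (forall e : R, 0 < e -> exists N, forall m n, (N <= m)%N -> (N <= n)%N ->
                 dist (u m) (u n) < e) ->
         exists l, forall e : R, 0 < e -> exists N, forall n, (N <= n)%N ->
                 dist (u n) l < e),
      (exists s : nat -> X, forall x (e : R), 0 < e -> exists n, dist x (s n) < e) &
      (forall A : set X, measurable A <->
         <<s [set B | exists x r, B = dball dist x r] >> A)].

(* Transition kernel T with densities t(. | x) = dT(. | x)/d lambda:
   t y x stands for t(y | x). *)
Definition kernel_density (d : measure_display) (R : realType)
  (X : measurableType d) (lam : {measure set X -> \bar R})
  (T : R.-pker X ~> X) (t : X -> X -> R) : Prop :=
  forall x, [/\ measurable_fun setT (fun y => t y x),
                (forall y, 0 <= t y x) &
                (forall A, measurable A -> T x A = (\int[lam]_(y in A) (t y x)%:E)%E)].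

Definition is_density (d : measure_display) (R : realType)
  (X : measurableType d) (lam : {measure set X -> \bar R})
  (p : probability X R) (f : X -> R) : Prop :=
  [/\ measurable_fun setT f, (forall y, 0 <= f y) &
      (forall A, measurable A -> p A = (\int[lam]_(y in A) (f y)%:E)%E)].

Definition unif_bounded (R : realType) (I X : Type) (F : I -> X -> R) : Prop :=
  exists M : R, forall i y, `|F i y| <= M.

Definition equicont (R : realType) (I X : Type) (dist : X -> X -> R)
  (F : I -> X -> R) : Prop :=
  forall (x' : X) (e : R), 0 < e -> exists2 delta : R, 0 < delta &
    forall y, dist y x' < delta -> forall i, `|F i y - F i x'| < e.

(* Predictor sequence of the filter along the fixed measurement sequence y:
   pi_{0-} = mu,  pi_n = upd n (y n) pi_{n-}  (measurement update),
   pi_{(n+1)-}(A) = \int T(A | x) pi_n(dx)  (prediction step). *)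
Definition predictor_seq (d : measure_display) (dY : measure_display)
  (R : realType) (X : measurableType d) (Y : measurableType dY)
  (T : R.-pker X ~> X) (mu : probability X R)
  (upd : nat -> Y -> probability X R -> probability X R) (y : nat -> Y)
  (pred : nat -> probability X R) : Prop :=
  pred 0%N = mu /\
  forall n A, measurable A ->
    pred n.+1 A = (\int[upd n (y n) (pred n)]_x T x A)%E.

(* Main.v *)
Require Import Defs.
From HB Require Import structures.
From mathcomp Require Import all_boot all_order all_algebra.
From mathcomp Require Import all_classical all_reals all_analysis.
From mathcomp Require Import measurable_realfun.
From mathcomp Require Import lra.
Import HBNNSimple.
Import Order.TTheory GRing.Theory Num.Theory.
Local Open Scope classical_set_scope.
Local Open Scope ring_scope.

Section Main.
Context (d : measure_display) (R : realType) (X : measurableType d)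
  (dist : X -> X -> R).
Hypothesis hpb : polish_borel dist.

Lemma dist_ge0 x y : 0 <= dist x y.
Proof. by case: hpb => -[]. Qed.
Lemma distC x y : dist x y = dist y x.
Proof. by case: hpb => -[]. Qed.
Lemma dist_tri x y z : dist x z <= dist x y + dist y z.
Proof. by case: hpb => -[]. Qed.

Definition sq : nat -> X := projT1 (cid (let: And4 _ _ h _ := hpb in h)).
Lemma sq_dense x (e : R) : 0 < e -> exists n, dist x (sq n) < e.
Proof. rewrite /sq; case: cid => s hs /=; exact: hs. Qed.

Lemma ball_meas z r : measurable (dball dist z r).
Proof.
case: hpb => _ _ _ h; apply/h; apply: sub_sigma_algebra; by exists z, r.
Qed.

Lemma arch (r : R) : 0 < r -> exists N : nat, forall k, (N <= k)%N -> (k.+1%:R)^-1 < r.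
Proof.
move=> r0; exists (Num.trunc (r^-1)) => k hk.
rewrite -(invrK r) ltf_pV2 ?posrE ?invr_gt0 //.
apply: lt_le_trans (truncnS_gt _) _; rewrite ler_nat; by [].
Qed.

Definition pr (i : nat) : nat * nat := odflt (0, 0)%N (unpickle i).
Definition bb (i : nat) := dball dist (sq (pr i).1) ((pr i).2.+1%:R^-1).

Lemma bb_meas i : measurable (bb i).
Proof. exact: ball_meas. Qed.

Lemma bb_in z r : 0 < r -> exists i, bb i z /\ bb i `<=` dball dist z r.
Proof.
move=> r0; have [N hN] := arch (r / 2) ltac:(by rewrite divr_gt0).
have [j hj] := sq_dense z (N.+1%:R^-1) ltac:(by rewrite invr_gt0 ltr0n).
exists (pickle (j, N)); rewrite /bb /pr pickleK /=; split.
  by rewrite /dball /= distC.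
move=> w; rewrite /dball /= => hw.
apply: le_lt_trans (dist_tri z (sq j) w) _.
have := hN N (leqnn N) => hN'.
rewrite [r](splitr r); apply: ltrD; apply: lt_trans hN'; by [].
Qed.

Lemma ball_in_bb i z : bb i z -> exists2 r, 0 < r & dball dist z r `<=` bb i.
Proof.
rewrite /bb /dball /= => hz; set c := sq _ in hz *; set rho := _^-1 in hz *.
exists (rho - dist c z); first by rewrite subr_gt0.
move=> w /= hw; apply: le_lt_trans (dist_tri c z w) _.
by rewrite -ltrBrDl.
Qed.

Lemma UP_repr (P : set X -> Prop) :
  (forall A B, A `<=` B -> P B -> P A) ->
  [set z | exists2 r, 0 < r & P (dball dist z r)] =
  \bigcup_i [set z | P (bb i) /\ bb i z].
Proof.
move=> Pm; apply/seteqP; split => z /=.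
  move=> [r r0 Pr]; have [i [hi sub]] := @bb_in z r r0.
  by exists i => //; split => //; exact: Pm Pr.
move=> [i _ [Pi hi]]; have [r r0 sub] := @ball_in_bb i z hi.
by exists r => //; exact: Pm Pi.
Qed.

Lemma UP_meas (P : set X -> Prop) :
  (forall A B, A `<=` B -> P B -> P A) ->
  measurable [set z | exists2 r, 0 < r & P (dball dist z r)].
Proof.
move=> Pm; rewrite UP_repr //; apply: bigcupT_measurable => i.
have [Pi|Pi] := pselect (P (bb i)).
  have -> : [set z | P (bb i) /\ bb i z] = bb i.
    by apply/seteqP; split => z /= //; case.
  exact: bb_meas.
have -> : [set z | P (bb i) /\ bb i z] = set0.
  by apply/seteqP; split => z //= [].
exact: measurable0.
Qed.

Lemma open_meas (U : set X) :
  (forall z, U z -> exists2 r, 0 < r & dball dist z r `<=` U) -> measurable U.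
Proof.
move=> hU.
have -> : U = [set z | exists2 r, 0 < r & dball dist z r `<=` U].
  apply/seteqP; split => z /=; first exact: hU.
  move=> [r r0 sub]; apply: sub; rewrite /dball /=.
  by case: hpb => -[_ h _ _] _ _ _; rewrite (proj2 (h z z) erefl).
by apply: (UP_meas (fun B => B `<=` U)) => A B AB BU; exact: subset_trans BU.
Qed.

Lemma cont_meas (g : X -> R) :
  (forall z e, 0 < e -> exists2 del, 0 < del & forall w, dist w z < del -> `|g w - g z| < e) ->
  measurable_fun setT g.
Proof.
move=> hg; apply: (measurability _ (RGenInftyO.measurableE R)) => //.
move=> _ [_ [a ->] <-]; rewrite setTI; apply: open_meas => z /=.
rewrite in_itv /= => gz.
have [del del0 hdel] := hg z (a - g z) ltac:(by rewrite subr_gt0).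
exists del => // w; rewrite /dball /= distC => /hdel hw.
rewrite in_itv /=; move: hw; rewrite ltr_norml => /andP[_].
by rewrite ltrBrDr subrK.
Qed.


Context (lam : {measure set X -> \bar R}) (T : R.-pker X ~> X) (t : X -> X -> R).
Hypothesis hkd : kernel_density lam T t.
Hypothesis hbd : unif_bounded (fun x z => t z x).
Hypothesis hec : equicont dist (fun x z => t z x).

Lemma t_ge0 z x : 0 <= t z x. Proof. by case: (hkd x). Qed.
Lemma t_measz x : measurable_fun setT (fun z => t z x). Proof. by case: (hkd x). Qed.
Lemma TE x A : measurable A -> T x A = (\int[lam]_(y in A) (t y x)%:E)%E.
Proof. by case: (hkd x) => _ _; apply. Qed.
Lemma T_le1 x A : measurable A -> (T x A <= 1)%E.
Proof.
move=> mA; rewrite -(@prob_kernel _ _ _ _ _ T x).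
by apply: le_measure => //; rewrite inE.
Qed.

Definition Mb : R := projT1 (cid hbd).
Lemma Mb_bound x z : `|t z x| <= Mb.
Proof. by rewrite /Mb; case: cid => M hM /=; exact: hM. Qed.
Lemma t_leM x z : t z x <= Mb.
Proof. exact: le_trans (ler_norm _) (Mb_bound x z). Qed.
Lemma Mb_ge0 : 0 <= Mb.
Proof. exact: le_trans (normr_ge0 _) (Mb_bound point point). Qed.

Definition pfin (B : set X) := exists C, [/\ measurable C, B `<=` C & (lam C < +oo)%E].
Definition Nset := [set z | exists2 r, 0 < r & lam.-negligible (dball dist z r)].
Definition Fin := [set z | exists2 r, 0 < r & pfin (dball dist z r)].
Definition S := ~` Nset `&` Fin.

Lemma Nset_meas : measurable Nset.
Proof. by apply: UP_meas => A B AB; exact: negligibleS. Qed.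
Lemma Fin_meas : measurable Fin.
Proof.
apply: UP_meas => A B AB [C [mC BC Cf]]; exists C; split => //.
exact: subset_trans BC.
Qed.
Lemma S_meas : measurable S.
Proof. apply: measurableI; [exact: measurableC Nset_meas|exact: Fin_meas]. Qed.

Lemma Nset_null : lam Nset = 0%E.
Proof.
apply: (measure_negligible Nset_meas).
rewrite /Nset (UP_repr (fun B => lam.-negligible B)); last first.
  by move=> A B AB; exact: negligibleS.
apply: negligible_bigcup => i.
have [Pi|Pi] := pselect (lam.-negligible (bb i)).
  by apply: negligibleS Pi => z [].
have -> : [set z | lam.-negligible (bb i) /\ bb i z] = set0.
  by apply/seteqP; split => z //= [].
exact: negligible_set0.
Qed.

Lemma notFin_oo z r : ~ Fin z -> 0 < r -> lam (dball dist z r) = +oo%E.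
Proof.
move=> nF r0; apply/eqP; rewrite eq_le leey /= leNgt; apply/negP => hlt.
by apply: nF; exists r => //; exists (dball dist z r); split => //; exact: ball_meas.
Qed.

Lemma S_pos z r : S z -> 0 < r -> lam (dball dist z r) != 0%E.
Proof.
move=> [nN _] r0; apply/negP => /eqP h0; apply: nN; exists r => //.
exists (dball dist z r); split => //; exact: ball_meas.
Qed.

Lemma S_fin z : S z -> exists2 r, 0 < r & (lam (dball dist z r) < +oo)%E.
Proof.
move=> [_ [r r0 [C [mC BC Cf]]]]; exists r => //.
apply: le_lt_trans Cf; apply: le_measure => //; rewrite inE //; exact: ball_meas.
Qed.

Lemma t_offFin z x : ~ Fin z -> t z x = 0.
Proof.
move=> nF; apply/eqP; rewrite eq_le t_ge0 andbT leNgt; apply/negP => c0.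
set c := t z x in c0.
have [del del0 hdel] := hec z (c / 2) ltac:(by rewrite divr_gt0).
have mB := ball_meas z del.
have := @T_le1 x _ mB; rewrite TE //.
have : ((c / 2)%:E * lam (dball dist z del) <= \int[lam]_(y in dball dist z del) (t y x)%:E)%E.
  rewrite -integral_cst //; apply: ge0_le_integral => //.
  - by move=> y _ /=; rewrite lee_fin divr_ge0 // ltW.
  - by apply/measurable_EFinP; apply: measurable_funS (t_measz x).
  move=> y; rewrite /dball /= distC => /hdel /(_ x); rewrite lee_fin.
  idtac.
  rewrite ltr_distl => /andP[h _]; apply: ltW; apply: le_lt_trans h.
  rewrite -/c; lra.
rewrite notFin_oo // gt0_muley ?lte_fin ?divr_gt0 // leye_eq => /eqP ->.
by rewrite leNgt ltey.
Qed.


Lemma avg_bound z x e rho : 0 < e ->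
  (forall y, dist y z < rho -> `|t y x - t z x| < e) ->
  (lam (dball dist z rho) < +oo)%E -> lam (dball dist z rho) != 0%E ->
  `|t z x - fine (T x (dball dist z rho)) / fine (lam (dball dist z rho))| <= e.
Proof.
move=> e0 hrho Lf L0.
set B := dball dist z rho; have mB : measurable B by exact: ball_meas.
have Lge0 : (0 <= lam B)%E by exact: measure_ge0.
have LE : lam B = (fine (lam B))%:E by rewrite fineK // ge0_fin_numE.
have l0 : 0 < fine (lam B).
  by rewrite lt_neqAle fine_ge0 // andbT eq_sym; apply/negP => /eqP h;
    move: L0; rewrite LE h eqxx.
set c := t z x.
have mt : measurable_fun B (fun y => (t y x)%:E).
  by apply/measurable_EFinP; apply: measurable_funS (t_measz x).
have up : (\int[lam]_(y in B) (t y x)%:E <= (c + e)%:E * lam B)%E.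
  rewrite -integral_cst //; apply: ge0_le_integral => //.
  - by move=> y _; rewrite lee_fin t_ge0.
  move=> y; rewrite /B /dball /= distC => /hrho; rewrite lee_fin.
  by move=> /ltW; rewrite ler_distl => /andP[].
have ige0 : (0 <= \int[lam]_(y in B) (t y x)%:E)%E.
  by apply: integral_ge0 => y _; rewrite lee_fin t_ge0.
have ifin : (\int[lam]_(y in B) (t y x)%:E)%E \is a fin_num.
  rewrite ge0_fin_numE //; apply: le_lt_trans up _.
  by rewrite LE -EFinM ltry.
have lo : (c - e) * fine (lam B) <= fine (\int[lam]_(y in B) (t y x)%:E).
  have [ce|ce] := leP (c - e) 0.
    by apply: le_trans (fine_ge0 ige0); rewrite pmulr_lle0.
  rewrite -lee_fin EFinM -LE fineK //.
  rewrite -integral_cst //; apply: ge0_le_integral => //.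
  - by move=> y _ /=; rewrite lee_fin ltW.
  move=> y; rewrite /B /dball /= distC => /hrho; rewrite lee_fin.
  by move=> /ltW; rewrite ler_distl => /andP[].
have up' : fine (\int[lam]_(y in B) (t y x)%:E) <= (c + e) * fine (lam B).
  by rewrite -lee_fin EFinM -LE fineK.
rewrite TE //; set i := fine _ in lo up' *; set l := fine _ in l0 lo up' *.
rewrite ler_distlC; apply/andP; split.
  by rewrite ler_pdivlMr.
by rewrite ler_pdivrMr.
Qed.

Lemma t_meas z : S z -> measurable_fun setT (fun x => t z x).
Proof.
move=> Sz; have [r0 r00 r0f] := S_fin z Sz.
pose rho (k : nat) := r0 * (k.+1%:R)^-1.
have rho0 k : 0 < rho k by rewrite /rho mulr_gt0 // invr_gt0 ltr0n.
have rhof k : (lam (dball dist z (rho k)) < +oo)%E.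
  apply: le_lt_trans r0f; apply: le_measure; rewrite ?inE; try exact: ball_meas.
  move=> w; rewrite /dball /= => h; apply: lt_le_trans h _.
  rewrite /rho -[leRHS]mulr1 ler_pM2l // invf_le1 ?ltr0n //. by rewrite -[1]/(1%:R) ler_nat.
pose h k x := fine (T x (dball dist z (rho k))) / fine (lam (dball dist z (rho k))).
apply: (measurable_fun_cvg (h := h)) => [k|x _].
  apply: measurable_funM; last exact: measurable_cst.
  apply: (measurableT_comp (fine_measurable measurableT)).
  exact: (measurable_kernel T _ (ball_meas _ _)).
apply/cvgrPdist_le => e e0.
have [del del0 hdel] := hec z e e0.
have [N hN] := arch (del / r0) ltac:(by rewrite divr_gt0).
exists N => // k /= hk; apply: avg_bound => //; last exact: S_pos z _ Sz (rho0 k).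
move=> y hy; apply: hdel; apply: lt_trans hy _.
by rewrite /rho mulrC -ltr_pdivlMr // hN.
Qed.


Lemma LI_mono (P : probability X R) (g1 g2 : X -> R) :
  (forall x, 0 <= g1 x) -> (forall x, g1 x <= g2 x) ->
  (\int[P]_x (g1 x)%:E <= \int[P]_x (g2 x)%:E)%E.
Proof.
move=> g10 g12; have g20 x : 0 <= g2 x by exact: le_trans (g10 x) (g12 x).
rewrite !ge0_integralTE ?lee_fin //; apply: ereal_sup_le => _ [h hh <-].
exists h => //= x; apply: le_trans (hh x) _; by rewrite lee_fin.
Qed.

Lemma LI_shift (P : probability X R) (g1 g2 : X -> R) (c : R) :
  (forall x, 0 <= g1 x) -> (forall x, 0 <= g2 x) -> 0 <= c ->
  (forall x, g1 x <= g2 x + c) ->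
  (\int[P]_x (g1 x)%:E <= \int[P]_x (g2 x)%:E + c%:E)%E.
Proof.
move=> g10 g20 c0 g12.
rewrite [X in (X <= _)%E]ge0_integralTE ?lee_fin //.
apply: ge_ereal_sup => _ [h hh <-] /=.
rewrite -integralT_nnsfun.
pose phi := (fun x => h x - c)^\+.
have phi0 x : 0 <= phi x by rewrite /phi /funrpos le_max lexx orbT.
have mphi : measurable_fun setT phi.
  by apply: measurable_funrpos; apply: measurable_funB => //; exact: measurable_cst.
have step1 : (\int[P]_x (h x)%:E <= \int[P]_x ((phi x)%:E + c%:E))%E.
  apply: ge0_le_integral => //.
  - by move=> x _; rewrite lee_fin.
  - by apply/measurable_EFinP.
  - apply: emeasurable_funD; first by apply/measurable_EFinP.
    exact: measurable_cst.
  move=> x _; rewrite -EFinD lee_fin /phi /funrpos.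
  by rewrite -lerBlDr le_max lexx.
apply: le_trans step1 _.
rewrite ge0_integralD //; last 2 first.
- by move=> x _; rewrite lee_fin.
- by apply/measurable_EFinP.
rewrite (integral_cst P measurableT).
have P1 : (P : measure X R) [set: X] = 1%E by exact: (probability_setT P).
rewrite P1 mule1 leeD2r //.
apply: LI_mono => // x; rewrite /phi /funrpos ge_max g20 andbT.
have := hh x; rewrite lee_fin => hx.
by rewrite lerBlDr; apply: le_trans hx (g12 x).
Qed.


Definition fP (P : probability X R) z := fine (\int[P]_x (t z x)%:E).

Lemma int_t_bounds (P : probability X R) z :
  (0 <= \int[P]_x (t z x)%:E)%E /\ (\int[P]_x (t z x)%:E <= Mb%:E)%E.
Proof.
split; first by apply: integral_ge0 => x _; rewrite lee_fin t_ge0.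
have := @LI_shift P (fun x => t z x) (fun _ => 0) Mb (t_ge0 z) (fun _ => lexx 0) Mb_ge0.
rewrite integral0 add0e; apply => x; rewrite add0r; exact: t_leM.
Qed.

Lemma int_t_E (P : probability X R) z : (\int[P]_x (t z x)%:E = (fP P z)%:E)%E.
Proof.
have [h0 h1] := int_t_bounds P z; rewrite /fP fineK // ge0_fin_numE //.
by apply: le_lt_trans h1 _; rewrite ltry.
Qed.

Lemma fP_ge0 P z : 0 <= fP P z.
Proof. by have [h0 _] := int_t_bounds P z; move: h0; rewrite int_t_E lee_fin. Qed.

Lemma fP_leM P z : fP P z <= Mb.
Proof. by have [_ h1] := int_t_bounds P z; move: h1; rewrite int_t_E lee_fin. Qed.

Lemma fP_lip (P : probability X R) w z e : 0 <= e ->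
  (forall x, `|t w x - t z x| <= e) -> `|fP P w - fP P z| <= e.
Proof.
move=> e0 he.
have h1 := @LI_shift P (fun x => t w x) (fun x => t z x) e (t_ge0 w) (t_ge0 z) e0.
have h2 := @LI_shift P (fun x => t z x) (fun x => t w x) e (t_ge0 z) (t_ge0 w) e0.
have {h1}h1 : fP P w <= fP P z + e.
  rewrite -lee_fin EFinD -!int_t_E; apply: h1 => x.
  by have := he x; rewrite ler_distl => /andP[_ ->].
have {h2}h2 : fP P z <= fP P w + e.
  rewrite -lee_fin EFinD -!int_t_E; apply: h2 => x.
  by have := he x; rewrite ler_distlC => /andP[_ ->].
by rewrite ler_norml; apply/andP; split; lra.
Qed.

Lemma fP_equi z e : 0 < e -> exists2 del, 0 < del &
  forall w, dist w z < del -> forall P, `|fP P w - fP P z| < e.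
Proof.
move=> e0; have [del del0 hdel] := hec z (e / 2) ltac:(by rewrite divr_gt0).
exists del => // w hw P; apply: (le_lt_trans (fP_lip P w z (e / 2) _ _)).
- by rewrite divr_ge0 // ltW.
- by move=> x; apply: ltW; exact: hdel.
- lra.
Qed.

Lemma fP_meas P : measurable_fun setT (fP P).
Proof.
apply: cont_meas => z e e0; have [del del0 h] := fP_equi z e e0.
by exists del => // w hw; exact: h.
Qed.

Lemma fP_offFin P z : ~ Fin z -> fP P z = 0.
Proof.
move=> nF; rewrite /fP (eq_integral (fun _ => 0%E)) ?integral0 //.
by move=> x _; rewrite t_offFin.
Qed.


Definition lamS := mrestr lam S_meas.

Lemma pfin_mono A B : A `<=` B -> pfin B -> pfin A.
Proof. by move=> AB [C [mC BC Cf]]; exists C; split => //; exact: subset_trans BC. Qed.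

Lemma lamS_sf : sigma_finite setT lamS.
Proof.
pose F i := [set z | pfin (bb i) /\ bb i z] `|` ~` Fin.
have mF1 i : measurable [set z | pfin (bb i) /\ bb i z].
  have [Pi|Pi] := pselect (pfin (bb i)).
    have -> : [set z | pfin (bb i) /\ bb i z] = bb i.
      by apply/seteqP; split => z /= //; case.
    exact: bb_meas.
  have -> : [set z | pfin (bb i) /\ bb i z] = set0.
    by apply/seteqP; split => z //= [].
  exact: measurable0.
have mF i : measurable (F i).
  by apply: measurableU => //; exact: measurableC Fin_meas.
exists F.
  apply/seteqP; split => z // _.
  have [hz|hz] := pselect (Fin z); last by exists 0%N => //; right.
  have : (\bigcup_i [set z | pfin (bb i) /\ bb i z]) z.
    by rewrite -(UP_repr pfin pfin_mono).
  by move=> [i _ hi]; exists i => //; left.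
move=> i; split => //; rewrite /lamS /mrestr.
have [[C [mC BC Cf]]|Pi] := pselect (pfin (bb i)).
  apply: le_lt_trans Cf; apply: le_measure; rewrite ?inE //.
    exact: measurableI (mF i) S_meas.
  move=> z [[[_ hz]|hz] [nN Fz]]; [exact: BC | by exfalso; apply: hz].
have -> : F i `&` S = set0.
  apply/seteqP; split => z // -[[[pi _]|hz] [nN Fz]]; [exact: Pi pi | exact: hz Fz].
by rewrite measure0.
Qed.

Lemma H_restr (h : X -> \bar R) A : measurable A ->
  (forall z, (0 <= h z)%E) -> measurable_fun setT h ->
  (forall z, ~ S z -> h z = 0%E) ->
  (\int[lam]_(z in A) h z = \int[lamS]_(z in A) h z)%E.
Proof.
move=> mA h0 mh hS.
have eA : A = (A `&` S) `|` (A `&` ~` S) by rewrite -setIUr setUCr setIT.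
have mAS : measurable (A `&` S) by exact: measurableI mA S_meas.
have mAnS : measurable (A `&` ~` S) by exact: measurableI mA (measurableC S_meas).
have dj : [disjoint A `&` S & A `&` ~` S].
  by apply/disj_setPS => z [[_ ?] [_ ?]].
have mhU : measurable_fun ((A `&` S) `|` (A `&` ~` S)) h.
  exact: measurable_funS mh.
rewrite eA !ge0_integral_setU //.
rewrite (integral0_eq lam (D := A `&` ~` S)); last by move=> z [_ /hS].
rewrite (integral0_eq lamS (D := A `&` ~` S)); last by move=> z [_ /hS].
rewrite !adde0; apply: eq_measure_integral => B mB BAS.
rewrite /= /mrestr setIidl //; by move=> z /BAS [].
Qed.

Lemma L_ae (h1 h2 : X -> \bar R) A : measurable A ->
  measurable_fun setT h1 -> measurable_fun setT h2 ->
  (forall z, ~ Nset z -> h1 z = h2 z) ->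
  (\int[lam]_(z in A) h1 z = \int[lam]_(z in A) h2 z)%E.
Proof.
move=> mA m1 m2 h12; apply: ae_eq_integral => //.
- by apply: (measurable_funS measurableT) => //; exact: m1.
- by apply: (measurable_funS measurableT) => //; exact: m2.
exists Nset; split => //; first exact: Nset_meas; first exact: Nset_null.
move=> z /= hz; apply/not_notP => nN; apply: hz => _; exact/h12.
Qed.


Definition valid i := exists w, S w /\ bb i w.
Definition gp i : X :=
  match pselect (valid i) with left h => projT1 (cid h) | right _ => point end.

Lemma gp_valid i : valid i -> S (gp i) /\ bb i (gp i).
Proof.
by move=> v; rewrite /gp; case: pselect => // h; case: cid => w [].
Qed.

Lemma gp_dense z e : S z -> 0 < e -> exists i, valid i /\ dist z (gp i) < e.
Proof.
move=> Sz e0; have [N hN] := arch (e / 2) ltac:(by rewrite divr_gt0).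
have [j hj] := sq_dense z (N.+1%:R^-1) ltac:(by rewrite invr_gt0 ltr0n).
pose i := pickle (j, N).
have bbz : bb i z by rewrite /bb /pr pickleK /dball /= distC.
have vi : valid i by exists z.
exists i; split => //; have [_] := gp_valid i vi.
rewrite /bb /pr pickleK /dball /= => hg.
apply: le_lt_trans (dist_tri z (sq j) (gp i)) _.
have := hN N (leqnn N).
move=> h; rewrite [e](splitr e); apply: ltrD; apply: lt_trans h; [exact: hj|exact: hg].
Qed.

Definition Q k i z := valid i /\ dist z (gp i) < k.+1%:R^-1.

Lemma Q_meas k i : measurable [set z | Q k i z].
Proof.
have [v|v] := pselect (valid i).
  have -> : [set z | Q k i z] = dball dist (gp i) (k.+1%:R^-1).
    by apply/seteqP; split => z; rewrite /Q /dball /= distC; [case|move=> h; split].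
  exact: ball_meas.
have -> : [set z | Q k i z] = set0 by apply/seteqP; split => z // [].
exact: measurable0.
Qed.

Definition psi k z : nat :=
  match pselect (exists i, `[< Q k i z >]) with
  | left h => ex_minn h | right _ => 0%N end.

Lemma psiP k z : S z -> Q k (psi k z) z /\ forall i, (i < psi k z)%N -> ~ Q k i z.
Proof.
move=> Sz; rewrite /psi; case: pselect => [h|nh].
  case: ex_minnP => m /asboolP Qm hmin; split => // i im /asboolP Qi.
  by have := hmin i Qi; rewrite leqNgt im.
exfalso; apply: nh.
have [i [vi hi]] := gp_dense z (k.+1%:R^-1) Sz ltac:(by rewrite invr_gt0 ltr0n).
by exists i; apply/asboolP.
Qed.

Lemma C_meas k m : measurable [set z | S z /\ psi k z = m].
Proof.
have -> : [set z | S z /\ psi k z = m] =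
    S `&` [set z | Q k m z] `&` \bigcap_i [set z | (i < m)%N -> ~ Q k i z].
  apply/seteqP; split => z /=.
    move=> [Sz <-]; have [h1 h2] := psiP k z Sz.
    by split; [split|move=> i _; exact: h2].
  move=> [[Sz Qm] hlt]; split => //; have [h1 h2] := psiP k z Sz.
  apply/eqP; rewrite eqn_leq; apply/andP; split.
    by rewrite leqNgt; apply/negP => /h2.
  by rewrite leqNgt; apply/negP => /(hlt _ I).
apply: measurableI; first exact: measurableI S_meas (Q_meas k m).
apply: bigcapT_measurable => i /=; have [im|im] := pselect (i < m)%N.
  have -> : [set z | (i < m)%N -> ~ Q k i z] = ~` [set z | Q k i z].
    by apply/seteqP; split => z /=; [move=> h; exact: h|move=> h _].
  exact: measurableC (Q_meas k i).
have -> : [set z | (i < m)%N -> ~ Q k i z] = setT.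
  by apply/seteqP; split => z //= _ hi; exfalso; exact: im hi.
exact: measurableT.
Qed.

Definition aK k (p : X * X) : R :=
  match pselect (S p.2) with left _ => t (gp (psi k p.2)) p.1 | right _ => 0 end.

Lemma aK_meas k : measurable_fun setT (aK k).
Proof.
move=> _ V mV; rewrite setTI.
pose C m := [set z | S z /\ psi k z = m].
have -> : aK k @^-1` V =
    (\bigcup_m ([set x | V (t (gp m) x)] `*` C m)) `|`
    ([set: X] `*` (~` S `&` [set _ | V 0])).
  apply/seteqP; split => -[x z]; rewrite /aK /=; case: pselect => Sz /= hV.
  - by left; exists (psi k z) => //.
  - by right.
  - by case: hV => [[m _ [/= hx [_ ->]]]|[_ [//]]].
  - by case: hV => [[m _ [/= hx [//]]]|[_ [_ v0]]].
apply: measurableU.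
  apply: bigcupT_measurable => m.
  have [vm|vm] := pselect (valid m).
    apply: measurableX; last exact: C_meas.
    have := t_meas (gp m) (proj1 (gp_valid m vm)) measurableT _ mV; by rewrite setTI.
  have -> : C m = set0.
    apply/seteqP; split => z // [Sz hm]; have [[v _] _] := psiP k z Sz.
    by apply: vm; rewrite -hm.
  by rewrite setX0; exact: measurable0.
apply: measurableX => //; apply: measurableI; first exact: measurableC S_meas.
have [v0|v0] := pselect (V 0).
  by have -> : [set _ : X | V 0] = setT by apply/seteqP; split.
by have -> : [set _ : X | V 0] = set0 by apply/seteqP; split.
Qed.

Definition tS (p : X * X) : R := t p.2 p.1 * \1_S p.2.

Lemma tS_meas : measurable_fun setT tS.
Proof.
apply: (@measurable_fun_cvg _ (X * X)%type R setT aK tS) => [k|[x z] _]; first exact: aK_meas.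
rewrite /tS /aK /=; case: pselect => Sz; last first.
  rewrite indicE memNset // mulr0; apply/cvgrPdist_le => e e0; apply: nearW => k; by rewrite subrr normr0 ltW.
rewrite indicE mem_set // mulr1; apply/cvgrPdist_le => e e0.
have [del del0 hdel] := hec z e e0.
have [N hN] := arch del del0.
exists N => // k /= hk; have [[_ hQ] _] := psiP k z Sz.
apply: ltW; rewrite distrC; apply: hdel; rewrite distC.
apply: lt_trans hQ _; exact: hN.
Qed.


Lemma density_eq (P : probability X R) A : measurable A ->
  (\int[P]_x T x A = \int[lam]_(z in A) (fP P z)%:E)%E.
Proof.
move=> mA.
pose H2 := isSFinite.Build _ _ _ (mrestr lam S_meas)
  (sfinite_measure_sigma_finite lamS_sf).
pose H3 := isSigmaFinite.Build _ _ _ (mrestr lam S_meas) lamS_sf.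
pose lamS' := HB.pack_for (SigmaFiniteMeasure.type X R) (mrestr lam S_meas) H2 H3.
pose Phi (p : X * X) := ((tS p * \1_A p.2)%:E)%E.
have mPhi : measurable_fun setT Phi.
  apply/measurable_EFinP; apply: measurable_funM; first exact: tS_meas.
  apply: measurableT_comp; last exact: measurable_snd.
  exact: measurable_indic.
have Phi0 p : (0 <= Phi p)%E.
  by rewrite /Phi lee_fin /tS !indicE mulr_ge0 ?mulr_ge0 ?t_ge0.
have := @fubini_tonelli _ _ X X R P lamS' Phi mPhi Phi0.
have eq1 x : (\int[lamS']_z Phi (x, z) = T x A)%E.
  have -> : (\int[lamS']_z Phi (x, z) = \int[lamS]_(z in A) (tS (x, z))%:E)%E.
    rewrite [RHS](eq_measure_integral lamS') //.
    rewrite [RHS]integral_mkcond; apply: eq_integral => z _.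
    rewrite /Phi /patch /= indicE; case: (boolP (z \in A)) => zA.
      by rewrite mulr1.
    by rewrite mulr0.
  rewrite -H_restr //; first last.
  - by move=> z nS; rewrite /tS /= indicE memNset // mulr0.
  - apply/measurable_EFinP; rewrite /tS /=; apply: measurable_funM.
      exact: t_measz.
    exact: measurable_indic S_meas.
  - by move=> z; rewrite lee_fin /tS /= mulr_ge0 ?t_ge0.
  rewrite TE //; apply: (L_ae _ _ _ mA).
  - apply/measurable_EFinP; rewrite /tS /=; apply: measurable_funM.
      exact: t_measz.
    exact: measurable_indic S_meas.
  - by apply/measurable_EFinP; exact: t_measz.
  move=> z nN; rewrite /tS /= indicE; have [Sz|nS] := pselect (S z).
    by rewrite mem_set // mulr1.
  rewrite memNset // mulr0 t_offFin //.
  by move=> Fz; apply: nS; split.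
have eq2 z : (\int[P]_x Phi (x, z) = (fP P z * \1_S z * \1_A z)%:E)%E.
  rewrite /Phi /tS /=; have [Sz|nS] := pselect (S z); last first.
    rewrite indicE memNset // !mulr0 mul0r.
    by rewrite (eq_integral (fun _ => 0%E)) ?integral0 // => x _; rewrite mulr0 mul0r.
  have [Az|nA] := pselect (A z); last first.
    rewrite !indicE (memNset nA) !mulr0.
    by rewrite (eq_integral (fun _ => 0%E)) ?integral0 // => x _; rewrite mulr0.
  rewrite !indicE !mem_set // !mulr1 -int_t_E.
  by apply: eq_integral => x _; rewrite !mulr1.
have E1 : (\int[P]_x \int[lamS']_z Phi (x, z) = \int[P]_x T x A)%E.
  by apply: eq_integral => x _; exact: eq1.
rewrite E1 => ->.
have -> : (\int[lamS']_z \int[P]_x Phi (x, z) =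
           \int[lamS]_(z in A) (fP P z * \1_S z)%:E)%E.
  rewrite [RHS](eq_measure_integral lamS') //.
  rewrite [RHS]integral_mkcond; apply: eq_integral => z _; rewrite eq2.
  rewrite /patch /= [\1_A z]indicE; case: (boolP (z \in A)) => zA.
    by rewrite mulr1.
  by rewrite mulr0.
have mfS : measurable_fun setT (fun z => fP P z * \1_S z).
  by apply: measurable_funM; [exact: fP_meas|exact: measurable_indic S_meas].
rewrite -H_restr //; first last.
- by move=> z nS; rewrite indicE memNset // mulr0.
- by apply/measurable_EFinP.
- by move=> z; rewrite lee_fin mulr_ge0 ?fP_ge0.
apply: L_ae => //.
- by apply/measurable_EFinP.
- by apply/measurable_EFinP; exact: fP_meas.
move=> z nN; rewrite indicE; have [Sz|nS] := pselect (S z).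
  by rewrite mem_set // mulr1.
rewrite memNset // mulr0 fP_offFin //.
by move=> Fz; apply: nS; split.
Qed.


Lemma pred_family (dY : measure_display) (Y : measurableType dY)
  (upd : nat -> Y -> probability X R -> probability X R) (y : nat -> Y)
  (mu : probability X R) (pred : nat -> probability X R) :
  predictor_seq T mu upd y pred ->
  exists f : nat -> X -> R,
     (forall n, (0 < n)%N -> is_density lam (pred n) (f n)) /\
     unif_bounded (fun n : {n : nat | (0 < n)%N} => f (sval n)) /\
     equicont dist (fun n : {n : nat | (0 < n)%N} => f (sval n)).
Proof.
move=> [_ hp].
exists (fun n => fP (upd n.-1 (y n.-1) (pred n.-1))); split; [|split].
- case=> // n _; split => //.
  + exact: fP_meas.
  + by move=> z; exact: fP_ge0.
  + by move=> A mA; rewrite hp //= density_eq.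
- exists Mb => -[n _] z /=; rewrite ger0_norm ?fP_ge0 //; exact: fP_leM.
- move=> z e e0; have [del del0 h] := fP_equi z e e0.
  by exists del => // w hw [n _] /=; exact: h.
Qed.

End Main.

Theorem lemma4 (d dY : measure_display) (R : realType)
  (X : measurableType d) (Y : measurableType dY) (dist : X -> X -> R)
  (lam : {measure set X -> \bar R}) (T : R.-pker X ~> X) (t : X -> X -> R)
  (upd : nat -> Y -> probability X R -> probability X R)
  (mu nu : probability X R) (y : nat -> Y)
  (predmu prednu : nat -> probability X R) :
  polish_borel dist ->
  kernel_density lam T t ->
  unif_bounded (fun x z => t z x) ->
  equicont dist (fun x z => t z x) ->
  predictor_seq T mu upd y predmu ->
  predictor_seq T nu upd y prednu ->
  (exists fmu : nat -> X -> R,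
     (forall n, (0 < n)%N -> is_density lam (predmu n) (fmu n)) /\
     unif_bounded (fun n : {n : nat | (0 < n)%N} => fmu (sval n)) /\
     equicont dist (fun n : {n : nat | (0 < n)%N} => fmu (sval n))) /\
  (exists fnu : nat -> X -> R,
     (forall n, (0 < n)%N -> is_density lam (prednu n) (fnu n)) /\
     unif_bounded (fun n : {n : nat | (0 < n)%N} => fnu (sval n)) /\
     equicont dist (fun n : {n : nat | (0 < n)%N} => fnu (sval n))).
Proof.
move=> hpb hkd hbd hec hmu hnu; split.
- by eapply pred_family; eassumption.
- by eapply pred_family; eassumption.
Qed.
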